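(* Let $W$ be a real symmetric $n\times n$ matrix with non-negative entries and zero diagonal, let $\lambda\ge 0$, and suppose $I+\lambda W = R^T R$ for some real matrix $R$ all of whose entries are non-negative. Then for every $z\in\mathbb{C}^n$ the function $x\mapsto D_{\lambda,W}(x;z)$ is convex on $\mathbb{C}^n$ (viewed as $\mathbb{R}^{2n}$).
   Context: For $x\in\mathbb{C}^n$, $|x|$ denotes the vector of magnitudes $(|x_1|,\dots,|x_n|)$ and $\|x\|_1=\sum_i |x_i|$. The penalty is $P_W(x)=\|x\|_1+\frac12\sum_{i,j} w_{i,j}|x_i x_j| = \|x\|_1+\frac12|x|^T W|x|$. For $\lambda\ge0$ and $z\in\mathbb{C}^n$, $D_{\lambda,W}(x;z)=\frac12\|z-x\|_2^2+\lambda P_W(x)$. *)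

(* Defs.v *)
(* C^n is modelled as row vectors 'rV[C]_n over an
   arbitrary numClosedFieldType C (an algebraically closed field with
   conjugation, order and norm, e.g. the complex numbers). *)
From HB Require Import structures.
From mathcomp Require Import all_boot all_order all_algebra.
Set Implicit Arguments. Unset Strict Implicit. Unset Printing Implicit Defensive.
Import Order.TTheory GRing.Theory Num.Theory.
Local Open Scope ring_scope.

Definition PW (C : numClosedFieldType) (n : nat) (W : 'M[C]_n) (x : 'rV[C]_n) : C :=
  \sum_(i < n) `|x 0 i| + 2^-1 * \sum_(i < n) \sum_(j < n) W i j * `|x 0 i * x 0 j|.

Definition Dfun (C : numClosedFieldType) (n : nat) (lam : C) (W : 'M[C]_n)
  (x z : 'rV[C]_n) : C :=
  2^-1 * \sum_(i < n) `|z 0 i - x 0 i| ^+ 2 + lam * PW W x.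

(* Convexity on C^n viewed as R^{2n}: convex combinations with real
   coefficients t in [0,1]. *)
Definition convex_on_Cn (C : numClosedFieldType) (n : nat) (f : 'rV[C]_n -> C) : Prop :=
  forall (x y : 'rV[C]_n) (t : C), 0 <= t -> t <= 1 ->
    f (t *: x + (1 - t) *: y) <= t * f x + (1 - t) * f y.

(* Main.v *)
Require Import Defs.
From HB Require Import structures.
From mathcomp Require Import all_boot all_order all_algebra.
From mathcomp Require Import ring.
Import Order.TTheory GRing.Theory Num.Theory.
Local Open Scope ring_scope.

Section Cvx.
Variables (C : numClosedFieldType) (n : nat) (x y : 'rV[C]_n) (t : C).
Hypotheses (t0 : 0 <= t) (t1 : t <= 1).
Let w := t *: x + (1 - t) *: y.
Definition cvx (f : 'rV[C]_n -> C) := f w <= t * f x + (1 - t) * f y.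

Lemma t1p : 0 <= 1 - t. Proof. by rewrite subr_ge0. Qed.

Lemma cvxD f g : cvx f -> cvx g -> cvx (fun v => f v + g v).
Proof.
rewrite /cvx => hf hg; apply: le_trans (lerD hf hg) _.
by rewrite !mulrDr addrACA.
Qed.

Lemma cvxZ c f : 0 <= c -> cvx f -> cvx (fun v => c * f v).
Proof.
rewrite /cvx => hc hf; apply: le_trans (ler_wpM2l hc hf) _.
by rewrite mulrDr !mulrA ![c * _]mulrC.
Qed.

Lemma cvx_sum (F : 'I_n -> 'rV[C]_n -> C) :
  (forall i, cvx (F i)) -> cvx (fun v => \sum_(i < n) F i v).
Proof.
rewrite /cvx => hF; apply: le_trans (ler_sum _ (fun i _ => hF i)) _.
by rewrite big_split /= !mulr_sumr.
Qed.

Lemma cvx_sumk m (F : 'I_m -> 'rV[C]_n -> C) :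
  (forall i, cvx (F i)) -> cvx (fun v => \sum_(i < m) F i v).
Proof.
rewrite /cvx => hF; apply: le_trans (ler_sum _ (fun i _ => hF i)) _.
by rewrite big_split /= !mulr_sumr.
Qed.

Lemma cvx_ext f g : (forall v, f v = g v) -> cvx f -> cvx g.
Proof. by rewrite /cvx => e; rewrite !e. Qed.

Lemma wE i : w 0 i = t * x 0 i + (1 - t) * y 0 i.
Proof. by rewrite /w !mxE. Qed.

Lemma cvx_aff (z : 'rV[C]_n) i :
  cvx (fun v => `|z 0 i - v 0 i| ^+ 2 - `|v 0 i| ^+ 2).
Proof.
rewrite /cvx wE !normCK !rmorphB !rmorphD !rmorphM /= !rmorphB /= rmorph1.
rewrite (geC0_conj t0); rewrite le_eqVlt; apply/orP; left; apply/eqP; ring.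
Qed.

Lemma cvx_norm i : cvx (fun v => `|v 0 i|).
Proof.
rewrite /cvx wE; apply: le_trans (ler_normD _ _) _.
by rewrite !normrM (ger0_norm t0) (ger0_norm t1p).
Qed.

Lemma cvx_sq m (R : 'M[C]_(m, n)) (hR : forall i j, 0 <= R i j) k :
  cvx (fun v => (\sum_(j < n) R k j * `|v 0 j|) ^+ 2).
Proof.
rewrite /cvx.
set a := \sum_(j < n) R k j * `|x 0 j|.
set b := \sum_(j < n) R k j * `|y 0 j|.
have ha : 0 <= a by apply: sumr_ge0 => j _; rewrite mulr_ge0.
have hb : 0 <= b by apply: sumr_ge0 => j _; rewrite mulr_ge0.
have hw : 0 <= \sum_(j < n) R k j * `|w 0 j|
  by apply: sumr_ge0 => j _; rewrite mulr_ge0.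
have h1 : \sum_(j < n) R k j * `|w 0 j| <= t * a + (1 - t) * b.
  apply: le_trans (ler_sum _ (fun j _ => ler_wpM2l (hR k j) (cvx_norm j))) _.
  rewrite /a /b !mulr_sumr -big_split /=; rewrite le_eqVlt; apply/orP; left; apply/eqP/eq_bigr => j _.
  by rewrite mulrDr !mulrA ![t * R k j]mulrC ![(1 - t) * R k j]mulrC.
have hab : 0 <= t * a + (1 - t) * b by rewrite addr_ge0 // mulr_ge0 // t1p.
apply: le_trans (lerXn2r 2 _ _ h1) _; rewrite ?nnegrE //.
rewrite -subr_ge0.
have -> : t * a ^+ 2 + (1 - t) * b ^+ 2 - (t * a + (1 - t) * b) ^+ 2
         = t * (1 - t) * (a - b) ^+ 2 by ring.
have hr : a - b \is Num.real by rewrite realB // ger0_real.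
rewrite realEsqr in hr.
by rewrite mulr_ge0 // mulr_ge0 // t1p.
Qed.
End Cvx.

Theorem mainTheorem2 (C : numClosedFieldType) (n m : nat) (W : 'M[C]_n) (lam : C)
  (R : 'M[C]_(m, n)) :
  W^T = W ->
  (forall i j, 0 <= W i j) ->
  (forall i, W i i = 0) ->
  0 <= lam ->
  (forall i j, 0 <= R i j) ->
  1%:M + lam *: W = R^T *m R ->
  forall z : 'rV[C]_n, convex_on_Cn (fun x => Dfun lam W x z).
Proof.
move=> _ _ _ hlam hR hRR z x y t t0 t1.
have key : forall v : 'rV[C]_n,
  \sum_(k < m) (\sum_(j < n) R k j * `|v 0 j|) ^+ 2 =
  \sum_(i < n) `|v 0 i| ^+ 2 +
    lam * \sum_(i < n) \sum_(j < n) W i j * `|v 0 i * v 0 j|.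
  move=> v.
  have e : forall k, (\sum_(j < n) R k j * `|v 0 j|) ^+ 2 =
     \sum_(i < n) \sum_(j < n) (R k i * R k j) * (`|v 0 i| * `|v 0 j|).
    move=> k; rewrite expr2 mulr_suml; apply: eq_bigr => i _.
    rewrite mulr_sumr; apply: eq_bigr => j _; ring.
  under eq_bigr do rewrite e.
  rewrite exchange_big /=.
  under eq_bigr do rewrite exchange_big /=.
  have e2 : forall i j, \sum_(k < m) R k i * R k j * (`|v 0 i| * `|v 0 j|)
     = ((i == j)%:R + lam * W i j) * (`|v 0 i| * `|v 0 j|).
    move=> i j; rewrite -mulr_suml.
    have := congr1 (fun M : 'M[C]_n => M i j) hRR => /=.
    rewrite !mxE => h; rewrite h; congr (_ * _).
    by apply: eq_bigr => k _; rewrite mxE.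
  under eq_bigr do under eq_bigr do rewrite e2 mulrDl.
  under eq_bigr do rewrite big_split /=.
  rewrite big_split /=; congr (_ + _).
    apply: eq_bigr => i _; rewrite (bigD1 i) //= eqxx mul1r big1 ?addr0.
      by rewrite expr2.
    by move=> j /negPf; rewrite eq_sym => ->; rewrite mul0r.
  rewrite mulr_sumr; apply: eq_bigr => i _; rewrite mulr_sumr.
  by apply: eq_bigr => j _; rewrite normrM; ring.
pose F := fun v : 'rV[C]_n =>
  2^-1 * \sum_(i < n) (`|z 0 i - v 0 i| ^+ 2 - `|v 0 i| ^+ 2)
  + 2^-1 * \sum_(k < m) (\sum_(j < n) R k j * `|v 0 j|) ^+ 2
  + lam * \sum_(i < n) `|v 0 i|.
have hF : forall v, F v = Dfun lam W v z.
  move=> v; rewrite /F key /Dfun /PW sumrB; ring.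
have hc : @cvx C n x y t F.
  apply: cvxD; [apply: cvxD|].
  - apply: cvxZ; first by rewrite invr_ge0 ler0n.
    by apply: cvx_sum => i; apply: cvx_aff.
  - apply: cvxZ; first by rewrite invr_ge0 ler0n.
    by apply: cvx_sumk => k; apply: cvx_sq.
  - by apply: cvxZ => //; apply: cvx_sum => i; apply: cvx_norm.
by move: hc; rewrite /cvx !hF.
Qed.
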